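(* The functor $T\colon\mathsf{WHB}\to\mathsf{TBA}$ is left adjoint to the functor $M\colon\mathsf{TBA}\to\mathsf{WHB}$. Moreover, $T$ preserves monomorphisms and is faithful, and $M$ is full and faithful.
   Context: A WHB-algebra is an algebra $(A,\wedge,\vee,\to,\leftarrow,0,1)$ such that $(A,\wedge,\vee,0,1)$ is a bounded distributive lattice and for all $a,b,c\in A$: $a\to a=1$; $a\to(b\wedge c)=(a\to b)\wedge(a\to c)$; $(a\vee b)\to c=(a\to c)\wedge(b\to c)$; $(a\to b)\wedge(b\to c)\le a\to c$; $a\leftarrow a=0$; $(a\vee b)\leftarrow c=(a\leftarrow c)\vee(b\leftarrow c)$; $a\leftarrow(b\wedge c)=(a\leftarrow b)\vee(a\leftarrow c)$; $a\leftarrow c\le(a\leftarrow b)\vee(b\leftarrow c)$; $a\wedge((a\to b)\leftarrow 0)\le b$; $a\le b\vee(1\to(a\leftarrow b))$. $\mathsf{WHB}$ is the category of WHB-algebras and homomorphisms. A tense algebra is $(\mathbf B,G,H)$ with $\mathbf B$ a Boolean algebra and $G,H$ unary operations such that, with $P(x)=\neg H(\neg x)$ and $F(x)=\neg G(\neg x)$, $P$ is left adjoint to $G$ and $F$ is left adjoint to $H$ (i.e. $P(x)\le y\iff x\le G(y)$ and $F(x)\le y\iff x\le H(y)$); $\mathsf{TBA}$ is the category of tense algebras and homomorphisms. $M(\mathbf B,G,H)$ is the WHB-algebra $(B,\wedge,\vee,\to,\leftarrow,0,1)$ with $x\to y=G(\neg x\vee y)$ and $x\leftarrow y=P(x\wedge\neg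 y)$, and $M$ is the identity on morphisms. For a WHB-algebra $\mathbf A$: $X(\mathbf A)$ is its set of prime filters, $\sigma_{\mathbf A}(a)=\{P\in X(\mathbf A)\colon a\in P\}$, $\tau_{\mathbf A}$ the topology with subbase $\{\sigma_{\mathbf A}(a)\}\cup\{X(\mathbf A)\setminus\sigma_{\mathbf A}(a)\}$; $(P,Q)\in R_{\mathbf A}$ iff for all $a,b$ ($a\to b\in P$, $a\in Q$ imply $b\in Q$); $(P,Q)\in S_{\mathbf A}$ iff for all $a,b$ ($a\in Q$, $b\notin Q$ imply $a\leftarrow b\in P$). $\mathcal B(\mathbf A)$ is the set of clopen subsets of $(X(\mathbf A),\tau_{\mathbf A})$ (equivalently finite unions of sets $\sigma_{\mathbf A}(a)\setminus\sigma_{\mathbf A}(b)$). $T(\mathbf A)=(\mathcal B(\mathbf A),\cup,\cap,{}^c,G_{\mathbf A},H_{\mathbf A},\emptyset,X(\mathbf A))$ with $G_{\mathbf A}(U)=\{P\colon R_{\mathbf A}(P)\subseteq U\}$ and $H_{\mathbf A}(U)=\{P\colon S_{\mathbf A}(P)\subseteq U\}$, where $\mathcal R(P)=\{Q\colon (P,Q)\in\mathcal R\}$. For a homomorphism $h\colon\mathbf A\to\mathbf B$, $T(h)(U)=\{Q\in X(\mathbf B)\colon h^{-1}(Q)\in U\}$, so that $T(h)(\sigma_{\mathbf A}(a)\setminus\sigma_{\mathbf A}(b))=\sigma_{\mathbf B}(h(a))\setminus\sigma_{\mathbf B}(h(b))$. *)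

(* Defs.v *)
From Stdlib Require Import List Classical ClassicalEpsilon.
Import ListNotations.

Definition is_bdl {X : Type} (meet join : X -> X -> X) (bot top : X) : Prop :=
  (forall a b c, meet a (meet b c) = meet (meet a b) c) /\
  (forall a b c, join a (join b c) = join (join a b) c) /\
  (forall a b, meet a b = meet b a) /\
  (forall a b, join a b = join b a) /\
  (forall a b, meet a (join a b) = a) /\
  (forall a b, join a (meet a b) = a) /\
  (forall a b c, meet a (join b c) = join (meet a b) (meet a c)) /\
  (forall a, meet a top = a) /\
  (forall a, join a bot = a).

Record WHBraw := {
  wcar : Type;
  wmeet : wcar -> wcar -> wcar;
  wjoin : wcar -> wcar -> wcar;
  wimp : wcar -> wcar -> wcar;
  wcoimp : wcar -> wcar -> wcar;
  wbot : wcar;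
  wtop : wcar }.

Definition wle (A : WHBraw) (a b : wcar A) : Prop := wmeet A a b = a.

Definition isWHB (A : WHBraw) : Prop :=
  let m := wmeet A in let j := wjoin A in
  let i := wimp A in let c := wcoimp A in
  let le := wle A in let z := wbot A in let o := wtop A in
  is_bdl m j z o /\
  (forall a, i a a = o) /\
  (forall a b d, i a (m b d) = m (i a b) (i a d)) /\
  (forall a b d, i (j a b) d = m (i a d) (i b d)) /\
  (forall a b d, le (m (i a b) (i b d)) (i a d)) /\
  (forall a, c a a = z) /\
  (forall a b d, c (j a b) d = j (c a d) (c b d)) /\
  (forall a b d, c a (m b d) = j (c a b) (c a d)) /\
  (forall a b d, le (c a d) (j (c a b) (c b d))) /\
  (forall a b, le (m a (c (i a b) z)) b) /\
  (forall a b, le a (j b (i o (c a b)))).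

Definition WHBhom (A A' : WHBraw) (f : wcar A -> wcar A') : Prop :=
  (forall a b, f (wmeet A a b) = wmeet A' (f a) (f b)) /\
  (forall a b, f (wjoin A a b) = wjoin A' (f a) (f b)) /\
  (forall a b, f (wimp A a b) = wimp A' (f a) (f b)) /\
  (forall a b, f (wcoimp A a b) = wcoimp A' (f a) (f b)) /\
  f (wbot A) = wbot A' /\
  f (wtop A) = wtop A'.

Record TBAraw := {
  tcar : Type;
  tmeet : tcar -> tcar -> tcar;
  tjoin : tcar -> tcar -> tcar;
  tneg : tcar -> tcar;
  tbot : tcar;
  ttop : tcar;
  tG : tcar -> tcar;
  tH : tcar -> tcar }.

Definition tle (B : TBAraw) (x y : tcar B) : Prop := tmeet B x y = x.
Definition tP (B : TBAraw) (x : tcar B) : tcar B := tneg B (tH B (tneg B x)).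
Definition tF (B : TBAraw) (x : tcar B) : tcar B := tneg B (tG B (tneg B x)).

Definition isTBA (B : TBAraw) : Prop :=
  is_bdl (tmeet B) (tjoin B) (tbot B) (ttop B) /\
  (forall x, tmeet B x (tneg B x) = tbot B) /\
  (forall x, tjoin B x (tneg B x) = ttop B) /\
  (forall x y, tle B (tP B x) y <-> tle B x (tG B y)) /\
  (forall x y, tle B (tF B x) y <-> tle B x (tH B y)).

Definition TBAhom (B B' : TBAraw) (f : tcar B -> tcar B') : Prop :=
  (forall x y, f (tmeet B x y) = tmeet B' (f x) (f y)) /\
  (forall x y, f (tjoin B x y) = tjoin B' (f x) (f y)) /\
  (forall x, f (tneg B x) = tneg B' (f x)) /\
  f (tbot B) = tbot B' /\
  f (ttop B) = ttop B' /\
  (forall x, f (tG B x) = tG B' (f x)) /\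
  (forall x, f (tH B x) = tH B' (f x)).

Definition M (B : TBAraw) : WHBraw := {|
  wcar := tcar B;
  wmeet := tmeet B;
  wjoin := tjoin B;
  wimp := fun x y => tG B (tjoin B (tneg B x) y);
  wcoimp := fun x y => tP B (tmeet B x (tneg B y));
  wbot := tbot B;
  wtop := ttop B |}.

Definition Mmap (B B' : TBAraw) (f : tcar B -> tcar B') : wcar (M B) -> wcar (M B') := f.

Definition prime_filter (A : WHBraw) (P : wcar A -> Prop) : Prop :=
  P (wtop A) /\ ~ P (wbot A) /\
  (forall a b, P a -> wle A a b -> P b) /\
  (forall a b, P a -> P b -> P (wmeet A a b)) /\
  (forall a b, P (wjoin A a b) -> P a \/ P b).

Definition X (A : WHBraw) : Type := { P : wcar A -> Prop | prime_filter A P }.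

Definition sigmaA (A : WHBraw) (a : wcar A) : X A -> Prop :=
  fun P => proj1_sig P a.

Definition RA (A : WHBraw) (P Q : X A) : Prop :=
  forall a b, proj1_sig P (wimp A a b) -> proj1_sig Q a -> proj1_sig Q b.

Definition SA (A : WHBraw) (P Q : X A) : Prop :=
  forall a b, proj1_sig Q a -> ~ proj1_sig Q b -> proj1_sig P (wcoimp A a b).

(* B(A): finite unions of sets sigma(a) \ sigma(b) (= the clopens of X(A)). *)
Definition inB (A : WHBraw) (U : X A -> Prop) : Prop :=
  exists l : list (wcar A * wcar A),
    forall P, U P <-> exists a b, In (a, b) l /\ sigmaA A a P /\ ~ sigmaA A b P.

Definition BA (A : WHBraw) : Type := { U : X A -> Prop | inB A U }.

Lemma inB_empty (A : WHBraw) : inB A (fun _ => False).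
Proof.
  exists nil; intros P; split; [intros [] | intros (a & b & H & _); destruct H].
Qed.

(* It is the identity on
   elements of B(A); the theorem below asserts (T_obj_ok, T_map_ok) that it is
   only ever applied to elements of B(A), so the fallback branch is never used. *)
Definition toB (A : WHBraw) (S : X A -> Prop) : BA A :=
  match excluded_middle_informative (inB A S) with
  | left p => exist _ S p
  | right _ => exist _ (fun _ => False) (inB_empty A)
  end.

Definition GA (A : WHBraw) (U : X A -> Prop) : X A -> Prop :=
  fun P => forall Q, RA A P Q -> U Q.
Definition HA (A : WHBraw) (U : X A -> Prop) : X A -> Prop :=
  fun P => forall Q, SA A P Q -> U Q.

Definition T (A : WHBraw) : TBAraw := {|
  tcar := BA A;
  tmeet := fun U V => toB A (fun P => proj1_sig U P /\ proj1_sig V P);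
  tjoin := fun U V => toB A (fun P => proj1_sig U P \/ proj1_sig V P);
  tneg := fun U => toB A (fun P => ~ proj1_sig U P);
  tbot := toB A (fun _ => False);
  ttop := toB A (fun _ => True);
  tG := fun U => toB A (GA A (proj1_sig U));
  tH := fun U => toB A (HA A (proj1_sig U)) |}.

Definition Tmap_raw (A A' : WHBraw) (h : wcar A -> wcar A') (U : BA A) : X A' -> Prop :=
  fun Q => exists p : prime_filter A (fun a => proj1_sig Q (h a)),
             proj1_sig U (exist _ (fun a => proj1_sig Q (h a)) p).

Definition Tmap (A A' : WHBraw) (h : wcar A -> wcar A') : tcar (T A) -> tcar (T A') :=
  fun U => toB A' (Tmap_raw A A' h U).

Definition T_obj_ok (A : WHBraw) : Prop :=
  inB A (fun _ => False) /\ inB A (fun _ => True) /\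
  forall U V : BA A,
    inB A (fun P => proj1_sig U P /\ proj1_sig V P) /\
    inB A (fun P => proj1_sig U P \/ proj1_sig V P) /\
    inB A (fun P => ~ proj1_sig U P) /\
    inB A (GA A (proj1_sig U)) /\
    inB A (HA A (proj1_sig U)).

Definition T_map_ok (A A' : WHBraw) (h : wcar A -> wcar A') : Prop :=
  forall U : BA A, inB A' (Tmap_raw A A' h U).

Definition T_is_functor : Prop :=
  (forall A, isWHB A -> T_obj_ok A /\ isTBA (T A)) /\
  (forall A A' h, isWHB A -> isWHB A' -> WHBhom A A' h ->
     T_map_ok A A' h /\ TBAhom (T A) (T A') (Tmap A A' h)) /\
  (forall A, isWHB A -> forall U, Tmap A A (fun a => a) U = U) /\
  (forall A A' A'' h h', isWHB A -> isWHB A' -> isWHB A'' ->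
     WHBhom A A' h -> WHBhom A' A'' h' ->
     forall U, Tmap A A'' (fun a => h' (h a)) U = Tmap A' A'' h' (Tmap A A' h U)).

Definition M_is_functor : Prop :=
  (forall B, isTBA B -> isWHB (M B)) /\
  (forall B B' f, isTBA B -> isTBA B' -> TBAhom B B' f ->
     WHBhom (M B) (M B') (Mmap B B' f)).

Definition T_left_adjoint_M : Prop :=
  exists Phi : forall (A : WHBraw) (B : TBAraw),
                 (tcar (T A) -> tcar B) -> (wcar A -> wcar (M B)),
    (forall A B, isWHB A -> isTBA B ->
       (forall g, TBAhom (T A) B g -> WHBhom A (M B) (Phi A B g)) /\
       (forall g1 g2, TBAhom (T A) B g1 -> TBAhom (T A) B g2 ->
          (forall a, Phi A B g1 a = Phi A B g2 a) -> forall U, g1 U = g2 U) /\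
       (forall f, WHBhom A (M B) f ->
          exists g, TBAhom (T A) B g /\ forall a, Phi A B g a = f a)) /\
    (forall A A' B B' (h : wcar A' -> wcar A) (k : tcar B -> tcar B')
            (g : tcar (T A) -> tcar B),
       isWHB A -> isWHB A' -> isTBA B -> isTBA B' ->
       WHBhom A' A h -> TBAhom B B' k -> TBAhom (T A) B g ->
       forall a', Phi A' B' (fun U => k (g (Tmap A' A h U))) a'
                  = Mmap B B' k (Phi A B g (h a'))).

Definition WHBmono (A A' : WHBraw) (h : wcar A -> wcar A') : Prop :=
  forall (C : WHBraw) (g1 g2 : wcar C -> wcar A), isWHB C ->
    WHBhom C A g1 -> WHBhom C A g2 ->
    (forall c, h (g1 c) = h (g2 c)) -> forall c, g1 c = g2 c.

Definition TBAmono (B B' : TBAraw) (k : tcar B -> tcar B') : Prop :=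
  forall (C : TBAraw) (g1 g2 : tcar C -> tcar B), isTBA C ->
    TBAhom C B g1 -> TBAhom C B g2 ->
    (forall c, k (g1 c) = k (g2 c)) -> forall c, g1 c = g2 c.

Definition T_preserves_monos : Prop :=
  forall A A' h, isWHB A -> isWHB A' -> WHBhom A A' h -> WHBmono A A' h ->
    TBAmono (T A) (T A') (Tmap A A' h).

Definition T_faithful : Prop :=
  forall A A' h1 h2, isWHB A -> isWHB A' -> WHBhom A A' h1 -> WHBhom A A' h2 ->
    (forall U, Tmap A A' h1 U = Tmap A A' h2 U) -> forall a, h1 a = h2 a.

Definition M_full : Prop :=
  forall B B' (f : wcar (M B) -> wcar (M B')), isTBA B -> isTBA B' ->
    WHBhom (M B) (M B') f -> exists k, TBAhom B B' k /\ forall x, Mmap B B' k x = f x.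

Definition M_faithful : Prop :=
  forall B B' f1 f2, isTBA B -> isTBA B' -> TBAhom B B' f1 -> TBAhom B B' f2 ->
    (forall x, Mmap B B' f1 x = Mmap B B' f2 x) -> forall x, f1 x = f2 x.

(* Main.v *)
Require Import Defs.
From Stdlib Require Import List Classical ClassicalEpsilon FunctionalExtensionality PropExtensionality.
Import ListNotations.


Definition incl {T : Type} (A B : T -> Prop) := forall t, A t -> B t.

Lemma set_ext {T : Type} (A B : T -> Prop) : incl A B -> incl B A -> A = B.
Proof.
  intros H1 H2; apply functional_extensionality; intro t;
  apply propositional_extensionality; split; auto.
Qed.

Section Zorn.
Variable T : Type.
Variable Fm : (T -> Prop) -> Prop.
Variable F0 : T -> Prop.
Hypothesis HF0 : Fm F0.
Hypothesis Hch : forall Ch : (T -> Prop) -> Prop,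
  (forall F, Ch F -> Fm F) ->
  (forall F G, Ch F -> Ch G -> incl F G \/ incl G F) ->
  (forall F, Ch F -> incl F0 F) ->
  Fm (fun x => F0 x \/ exists F, Ch F /\ F x).

Definition zs (F : T -> Prop) : T -> Prop :=
  match excluded_middle_informative (exists G, Fm G /\ incl F G /\ ~ incl G F) with
  | left p => proj1_sig (constructive_indefinite_description _ p)
  | right _ => F
  end.

Lemma zs_spec F :
  (incl F (zs F)) /\ (Fm F -> Fm (zs F)) /\
  ((exists G, Fm G /\ incl F G /\ ~ incl G F) -> ~ incl (zs F) F).
Proof.
  unfold zs; destruct excluded_middle_informative as [p|n].
  - destruct (constructive_indefinite_description _ p) as [G (H1 & H2 & H3)]; simpl.
    auto.
  - split; [intros t; auto|split; auto].
Qed.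

Inductive tower : (T -> Prop) -> Prop :=
| tw_s : forall F, tower F -> tower (zs F)
| tw_sup : forall Fam : (T -> Prop) -> Prop, (forall F, Fam F -> tower F) ->
    tower (fun x => F0 x \/ exists F, Fam F /\ F x).

Lemma tower_F0 x : tower x -> incl F0 x.
Proof.
  induction 1 as [F _ IH| Fam _ IH].
  - intros t Ht. apply (proj1 (zs_spec F)); auto.
  - intros t Ht; left; auto.
Qed.

Definition extreme c := forall x, tower x -> incl x c -> ~ incl c x -> incl (zs x) c.

Lemma L1 c : tower c -> extreme c -> forall x, tower x -> incl x c \/ incl (zs c) x.
Proof.
  intros Tc Ec x Tx. induction Tx as [y Ty IH | Fam HFam IH].
  - destruct IH as [H|H].
    + destruct (classic (incl c y)) as [H'|H'].
      * right. assert (y = c) by (apply set_ext; auto). subst; intros t Ht; auto.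
      * left. apply Ec; auto.
    + right. intros t Ht. apply (proj1 (zs_spec y)); auto.
  - destruct (classic (forall F, Fam F -> incl F c)) as [H|H].
    + left. intros t [Ht|(F & HF & Ht)].
      * apply (tower_F0 c Tc); auto.
      * apply (H F); auto.
    + apply not_all_ex_not in H. destruct H as [F HF].
      apply imply_to_and in HF. destruct HF as [HF1 HF2].
      destruct (IH F HF1) as [H|H]; [contradiction|].
      right. intros t Ht. right. exists F; auto.
Qed.

Lemma L2 c : tower c -> extreme c.
Proof.
  induction 1 as [d Td IH | Fam HFam IH].
  - intros x Tx H1 H2.
    destruct (L1 d Td IH x Tx) as [H|H]; [|contradiction].
    destruct (classic (incl d x)) as [H'|H'].
    + assert (x = d) by (apply set_ext; auto). subst. intros t Ht; auto.
    + intros t Ht. apply (proj1 (zs_spec d)). apply (IH x Tx H H' t Ht).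
  - intros x Tx H1 H2.
    destruct (classic (exists G, Fam G /\ ~ incl G x)) as [(G & HG & HGx)|HN].
    + destruct (L1 G (HFam G HG) (IH G HG) x Tx) as [H|H].
      * intros t Ht. right. exists G. split; auto.
        apply (IH G HG x Tx H HGx); auto.
      * exfalso. apply HGx. intros t Ht. apply H. apply (proj1 (zs_spec G)); auto.
    + exfalso. apply H2. intros t [Ht|(F & HF & Ht)].
      * apply (tower_F0 x Tx); auto.
      * apply NNPP. intro Hn. apply HN. exists F. split; auto.
Qed.

Lemma tower_chain x y : tower x -> tower y -> incl x y \/ incl y x.
Proof.
  intros Tx Ty. destruct (L1 y Ty (L2 y Ty) x Tx) as [H|H]; auto.
  right. intros t Ht. apply H. apply (proj1 (zs_spec y)); auto.
Qed.

Lemma tower_Fm x : tower x -> Fm x.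
Proof.
  induction 1 as [F TF IH | Fam HFam IH].
  - apply (proj1 (proj2 (zs_spec F))); auto.
  - apply Hch; auto.
    + intros; apply tower_chain; auto.
    + intros; apply tower_F0; auto.
Qed.

Theorem zorn : exists Mx, Fm Mx /\ incl F0 Mx /\ forall G, Fm G -> incl Mx G -> incl G Mx.
Proof.
  set (U := fun x => F0 x \/ exists F, tower F /\ F x).
  assert (TU : tower U) by (apply tw_sup; auto).
  exists U. split; [apply tower_Fm; auto|]. split; [apply tower_F0; auto|].
  intros G FG HUG. apply NNPP. intro HGU.
  apply (proj2 (proj2 (zs_spec U))).
  - exists G; auto.
  - intros t Ht. right. exists (zs U). split; auto. apply tw_s; auto.
Qed.
End Zorn.

Section Lat.
Variable X : Type.
Variables (m j : X -> X -> X) (z o : X).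
Hypothesis L : is_bdl m j z o.

Definition le a b := m a b = a.

Lemma mA a b c : m a (m b c) = m (m a b) c. Proof. apply L. Qed.
Lemma jA a b c : j a (j b c) = j (j a b) c. Proof. apply L. Qed.
Lemma mC a b : m a b = m b a. Proof. apply L. Qed.
Lemma jC a b : j a b = j b a. Proof. apply L. Qed.
Lemma mabs a b : m a (j a b) = a. Proof. apply L. Qed.
Lemma jabs a b : j a (m a b) = a. Proof. apply L. Qed.
Lemma mdist a b c : m a (j b c) = j (m a b) (m a c). Proof. apply L. Qed.
Lemma mo a : m a o = a. Proof. apply L. Qed.
Lemma jz a : j a z = a. Proof. apply L. Qed.

Lemma midem a : m a a = a.
Proof. rewrite <- (jabs a a) at 2. apply mabs. Qed.
Lemma jidem a : j a a = a.
Proof. rewrite <- (mabs a a) at 2. apply jabs. Qed.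

Lemma le_refl a : le a a. Proof. apply midem. Qed.
Lemma le_trans a b c : le a b -> le b c -> le a c.
Proof. unfold le; intros H1 H2. rewrite <- H1, <- mA, H2. reflexivity. Qed.
Lemma le_antisym a b : le a b -> le b a -> a = b.
Proof. unfold le; intros H1 H2. transitivity (m a b); [symmetry; auto|]. rewrite mC; auto. Qed.
Lemma le_join a b : le a b <-> j a b = b.
Proof.
  unfold le; split; intro H.
  - rewrite <- H, jC, mC. apply jabs.
  - rewrite <- H. apply mabs.
Qed.
Lemma meet_lb1 a b : le (m a b) a.
Proof. unfold le. rewrite (mC a b), <- mA, midem. reflexivity. Qed.
Lemma meet_lb2 a b : le (m a b) b.
Proof. unfold le. rewrite <- mA, midem. reflexivity. Qed.
Lemma meet_glb a b c : le c a -> le c b -> le c (m a b).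
Proof. unfold le; intros H1 H2. rewrite mA, H1, H2. reflexivity. Qed.
Lemma join_ub1 a b : le a (j a b).
Proof. apply mabs. Qed.
Lemma join_ub2 a b : le b (j a b).
Proof. rewrite jC. apply mabs. Qed.
Lemma join_lub a b c : le a c -> le b c -> le (j a b) c.
Proof. rewrite !le_join; intros H1 H2. rewrite <- jA, H2, H1. reflexivity. Qed.
Lemma le_top a : le a o. Proof. apply mo. Qed.
Lemma le_bot a : le z a.
Proof. apply le_join. rewrite jC. apply jz. Qed.
Lemma meet_mono a b a' b' : le a a' -> le b b' -> le (m a b) (m a' b').
Proof.
  intros; apply meet_glb.
  - eapply le_trans; [apply meet_lb1|]; auto.
  - eapply le_trans; [apply meet_lb2|]; auto.
Qed.
Lemma join_mono a b a' b' : le a a' -> le b b' -> le (j a b) (j a' b').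
Proof.
  intros; apply join_lub.
  - eapply le_trans; [|apply join_ub1]; auto.
  - eapply le_trans; [|apply join_ub2]; auto.
Qed.
Lemma mdistr a b c : m (j b c) a = j (m b a) (m c a).
Proof. rewrite mC, mdist, (mC a b), (mC a c). reflexivity. Qed.
Lemma mz a : m a z = z.
Proof. rewrite mC. apply le_bot. Qed.
Lemma jo a : j a o = o.
Proof. apply le_join. apply le_top. Qed.

Definition filt (F : X -> Prop) := F o /\ (forall a b, F a -> le a b -> F b) /\
  (forall a b, F a -> F b -> F (m a b)).
Definition idl (I : X -> Prop) := I z /\ (forall a b, I b -> le a b -> I a) /\
  (forall a b, I a -> I b -> I (j a b)).
Definition gprime (Q : X -> Prop) := Q o /\ ~ Q z /\
  (forall a b, Q a -> le a b -> Q b) /\ (forall a b, Q a -> Q b -> Q (m a b)) /\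
  (forall a b, Q (j a b) -> Q a \/ Q b).

Theorem PFT (F I : X -> Prop) : filt F -> idl I -> (forall x, F x -> I x -> False) ->
  exists Q, gprime Q /\ incl F Q /\ (forall x, Q x -> I x -> False).
Proof.
  intros HF HI HFI.
  set (Fm := fun G => filt G /\ incl F G /\ (forall x, G x -> I x -> False)).
  destruct (zorn X Fm F) as (Mx & (HM1 & HM2 & HM3) & HM4 & HM5).
  - intros Ch H1 H2 H3. split; [|split].
    + destruct HF as (Fo & Fu & Fmm). split; [|split].
      * left; auto.
      * intros a b [Ha|(G & HG & Ha)] Hab.
        -- left; eapply Fu; eauto.
        -- right; exists G; split; auto. eapply (proj1 (proj2 (proj1 (H1 G HG)))); eauto.
      * intros a b [Ha|(G & HG & Ha)] [Hb|(G' & HG' & Hb)].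
        -- left; auto.
        -- right; exists G'; split; auto. apply (proj2 (proj2 (proj1 (H1 G' HG')))); auto.
           apply (H3 G' HG'); auto.
        -- right; exists G; split; auto. apply (proj2 (proj2 (proj1 (H1 G HG)))); auto.
           apply (H3 G HG); auto.
        -- destruct (H2 G G' HG HG') as [Hi|Hi].
           ++ right; exists G'; split; auto. apply (proj2 (proj2 (proj1 (H1 G' HG')))); auto.
           ++ right; exists G; split; auto. apply (proj2 (proj2 (proj1 (H1 G HG)))); auto.
    + intros t Ht; left; auto.
    + intros x [Hx|(G & HG & Hx)] Ix; [eapply HFI; eauto|].
      eapply (proj2 (proj2 (H1 G HG))); eauto.
  - exists Mx. split; [|split; auto].
    destruct HM1 as (Mo & Mu & Mm).
    destruct HI as (Iz & Id & Ij).
    split; [auto|split; [intro; eapply HM3; eauto|split; [auto|split; [auto|]]]].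
    intros a b Hab. apply NNPP. intro Hn. apply not_or_and in Hn. destruct Hn as [Na Nb].
    assert (Hext : forall c, ~ Mx c -> exists t y, Mx t /\ le (m t c) y /\ I y).
    { intros c Nc. apply NNPP. intro Hn.
      set (Mc := fun y => exists t, Mx t /\ le (m t c) y).
      assert (FMc : Fm Mc).
      { split; [split; [|split]|split].
        - exists o; split; auto. apply le_top.
        - intros a' b' (t & Ht & Hle) Hab'. exists t; split; auto. eapply le_trans; eauto.
        - intros a' b' (t & Ht & Hle) (t' & Ht' & Hle'). exists (m t t'). split; auto.
          apply meet_glb.
          + eapply le_trans; [|apply Hle]. apply meet_mono; [apply meet_lb1|apply le_refl].
          + eapply le_trans; [|apply Hle']. apply meet_mono; [apply meet_lb2|apply le_refl].
        - intros t Ht. exists t. split; [apply HM4; auto|apply meet_lb1].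
        - intros y (t & Ht & Hle) Iy. apply Hn. exists t, y; auto. }
      apply Nc. apply (HM5 Mc FMc).
      - intros t Ht. exists t; split; auto. apply meet_lb1.
      - exists o. split; auto. apply meet_lb2. }
    destruct (Hext a Na) as (t1 & y1 & Ht1 & Hl1 & Iy1).
    destruct (Hext b Nb) as (t2 & y2 & Ht2 & Hl2 & Iy2).
    apply (HM3 (m (m t1 t2) (j a b))); [auto|].
    apply (Id _ (j y1 y2)); [auto|].
    rewrite mdist. apply join_mono.
    + eapply le_trans; [|apply Hl1]. apply meet_mono; [apply meet_lb1|apply le_refl].
    + eapply le_trans; [|apply Hl2]. apply meet_mono; [apply meet_lb2|apply le_refl].
Qed.

Lemma sep a b : ~ le a b -> exists Q, gprime Q /\ Q a /\ ~ Q b.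
Proof.
  intro Hn.
  destruct (PFT (fun x => le a x) (fun x => le x b)) as (Q & HQ & HFQ & HQI).
  - split; [apply le_top|split].
    + intros; eapply le_trans; eauto.
    + intros; apply meet_glb; auto.
  - split; [apply le_bot|split].
    + intros; eapply le_trans; eauto.
    + intros; apply join_lub; auto.
  - intros x H1 H2. apply Hn; eapply le_trans; eauto.
  - exists Q. split; auto. split.
    + apply HFQ, le_refl.
    + intro Hb. apply (HQI b Hb), le_refl.
Qed.

Lemma le_primes a b : (forall Q, gprime Q -> Q a -> Q b) -> le a b.
Proof.
  intro H. apply NNPP. intro Hn. destruct (sep a b Hn) as (Q & HQ & Ha & Hb). apply Hb, H; auto.
Qed.

Lemma eq_primes a b : (forall Q, gprime Q -> (Q a <-> Q b)) -> a = b.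
Proof.
  intro H; apply le_antisym; apply le_primes; intros Q HQ Hq; [apply (proj1 (H Q HQ))|apply (proj2 (H Q HQ))]; auto.
Qed.

Lemma gp_meet Q a b : gprime Q -> (Q (m a b) <-> Q a /\ Q b).
Proof.
  intros (H1 & H2 & H3 & H4 & H5). split.
  - intro H; split; eapply H3; eauto; [apply meet_lb1|apply meet_lb2].
  - intros [Ha Hb]; auto.
Qed.
Lemma gp_join Q a b : gprime Q -> (Q (j a b) <-> Q a \/ Q b).
Proof.
  intros (H1 & H2 & H3 & H4 & H5). split; auto.
  intros [H|H]; eapply H3; eauto; [apply join_ub1|apply join_ub2].
Qed.
Lemma gp_le Q a b : gprime Q -> le a b -> Q a -> Q b.
Proof. intros (H1 & H2 & H3 & H4 & H5) H Ha. eauto. Qed.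
Lemma gp_top Q : gprime Q -> Q o. Proof. intros H; apply H. Qed.
Lemma gp_bot Q : gprime Q -> ~ Q z. Proof. intros H; apply H. Qed.

End Lat.

Section TB.
Variable B : TBAraw.
Hypothesis HB : isTBA B.

Let m := tmeet B. Let jn := tjoin B. Let ng := tneg B.

Lemma bdlB : is_bdl (tmeet B) (tjoin B) (tbot B) (ttop B).
Proof. apply HB. Qed.

Definition bprime := gprime (tcar B) (tmeet B) (tjoin B) (tbot B) (ttop B).

Lemma qmeet Q (HQ : bprime Q) a b : Q (tmeet B a b) = (Q a /\ Q b).
Proof. apply propositional_extensionality. apply (gp_meet _ _ _ _ _ bdlB); auto. Qed.
Lemma qjoin Q (HQ : bprime Q) a b : Q (tjoin B a b) = (Q a \/ Q b).
Proof. apply propositional_extensionality. apply (gp_join _ _ _ _ _ bdlB); auto. Qed.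
Lemma qtop Q (HQ : bprime Q) : Q (ttop B) = True.
Proof. apply propositional_extensionality. split; auto. intros _; apply HQ. Qed.
Lemma qbot Q (HQ : bprime Q) : Q (tbot B) = False.
Proof. apply propositional_extensionality. split; [apply HQ|intros []]. Qed.
Lemma qneg Q (HQ : bprime Q) a : Q (tneg B a) = (~ Q a).
Proof.
  apply propositional_extensionality. destruct HB as (_ & H1 & H2 & _). split.
  - intros H Ha. apply (proj1 (proj2 HQ)). rewrite <- (H1 a). rewrite (qmeet Q HQ). auto.
  - intros Hn. assert (Q (tjoin B a (tneg B a))) as H by (rewrite H2; apply HQ).
    rewrite (qjoin Q HQ) in H. tauto.
Qed.

Lemma ble x y : (forall Q, bprime Q -> Q x -> Q y) -> tle B x y.
Proof. apply (le_primes _ _ _ _ _ bdlB). Qed.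
Lemma beq x y : (forall Q, bprime Q -> (Q x <-> Q y)) -> x = y.
Proof. apply (eq_primes _ _ _ _ _ bdlB). Qed.

Ltac bsem HQ := repeat (rewrite (qmeet _ HQ) in * || rewrite (qjoin _ HQ) in * ||
   rewrite (qneg _ HQ) in * || rewrite (qtop _ HQ) in * || rewrite (qbot _ HQ) in * ).
Ltac bsolve := first [apply ble | apply beq]; let Q := fresh "Q" in let HQ := fresh "HQ" in
  intros Q HQ; bsem HQ; tauto.

Lemma bt_trans x y w : tle B x y -> tle B y w -> tle B x w.
Proof. apply (le_trans _ _ _ _ _ bdlB). Qed.
Lemma bt_antisym x y : tle B x y -> tle B y x -> x = y.
Proof. apply (le_antisym _ _ _ _ _ bdlB). Qed.
Lemma bt_refl x : tle B x x.
Proof. apply (le_refl _ _ _ _ _ bdlB). Qed.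

Lemma adjPG x y : tle B (tP B x) y <-> tle B x (tG B y).
Proof. apply HB. Qed.
Lemma adjFH x y : tle B (tF B x) y <-> tle B x (tH B y).
Proof. apply HB. Qed.

Lemma GP_ge x : tle B x (tG B (tP B x)).
Proof. apply adjPG, bt_refl. Qed.
Lemma PG_le x : tle B (tP B (tG B x)) x.
Proof. apply adjPG, bt_refl. Qed.
Lemma G_mono x y : tle B x y -> tle B (tG B x) (tG B y).
Proof. intro H. apply adjPG. eapply bt_trans; [apply PG_le|auto]. Qed.
Lemma P_mono x y : tle B x y -> tle B (tP B x) (tP B y).
Proof. intro H. apply adjPG. eapply bt_trans; [apply H|apply GP_ge]. Qed.
Lemma FH_le x : tle B (tF B (tH B x)) x.
Proof. apply adjFH, bt_refl. Qed.
Lemma HF_ge x : tle B x (tH B (tF B x)).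
Proof. apply adjFH, bt_refl. Qed.
Lemma H_mono x y : tle B x y -> tle B (tH B x) (tH B y).
Proof. intro H. apply adjFH. eapply bt_trans; [apply FH_le|auto]. Qed.
Lemma F_mono x y : tle B x y -> tle B (tF B x) (tF B y).
Proof. intro H. apply adjFH. eapply bt_trans; [apply H|apply HF_ge]. Qed.

Lemma G_meet x y : tG B (tmeet B x y) = tmeet B (tG B x) (tG B y).
Proof.
  apply bt_antisym.
  - apply (meet_glb _ _ _ _ _ bdlB); apply G_mono; bsolve.
  - apply adjPG. apply (meet_glb _ _ _ _ _ bdlB).
    + eapply bt_trans; [apply P_mono|apply PG_le]. bsolve.
    + eapply bt_trans; [apply P_mono|apply PG_le]. bsolve.
Qed.
Lemma G_top : tG B (ttop B) = ttop B.
Proof.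
  apply bt_antisym; [bsolve|]. apply adjPG. bsolve.
Qed.
Lemma H_meet x y : tH B (tmeet B x y) = tmeet B (tH B x) (tH B y).
Proof.
  apply bt_antisym.
  - apply (meet_glb _ _ _ _ _ bdlB); apply H_mono; bsolve.
  - apply adjFH. apply (meet_glb _ _ _ _ _ bdlB).
    + eapply bt_trans; [apply F_mono|apply FH_le]. bsolve.
    + eapply bt_trans; [apply F_mono|apply FH_le]. bsolve.
Qed.
Lemma H_top : tH B (ttop B) = ttop B.
Proof.
  apply bt_antisym; [bsolve|]. apply adjFH. bsolve.
Qed.
Lemma P_join x y : tP B (tjoin B x y) = tjoin B (tP B x) (tP B y).
Proof.
  apply bt_antisym.
  - apply adjPG. apply (join_lub _ _ _ _ _ bdlB).
    + eapply bt_trans; [apply GP_ge|apply G_mono]. bsolve.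
    + eapply bt_trans; [apply GP_ge|apply G_mono]. bsolve.
  - apply (join_lub _ _ _ _ _ bdlB); apply P_mono; bsolve.
Qed.
Lemma P_bot : tP B (tbot B) = tbot B.
Proof.
  apply bt_antisym; [|bsolve]. apply adjPG. bsolve.
Qed.
Lemma negneg x : tneg B (tneg B x) = x.
Proof. bsolve. Qed.
Lemma H_eq x : tH B x = tneg B (tP B (tneg B x)).
Proof. unfold tP. rewrite !negneg. reflexivity. Qed.

Lemma M_isWHB : isWHB (M B).
Proof.
  unfold isWHB, wle; cbn.
  split; [apply bdlB|].
  split; [intro a; replace (tjoin B (tneg B a) a) with (ttop B) by bsolve; apply G_top|].
  split; [intros a b d; rewrite <- G_meet; f_equal; bsolve|].
  split; [intros a b d; rewrite <- G_meet; f_equal; bsolve|].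
  split; [intros a b d; rewrite <- G_meet; apply G_mono; bsolve|].
  split; [intro a; replace (tmeet B a (tneg B a)) with (tbot B) by bsolve; apply P_bot|].
  split; [intros a b d; rewrite <- P_join; f_equal; bsolve|].
  split; [intros a b d; rewrite <- P_join; f_equal; bsolve|].
  split; [intros a b d; rewrite <- P_join; apply P_mono; bsolve|].
  split.
  - intros a b.
    replace (tmeet B (tG B (tjoin B (tneg B a) b)) (tneg B (tbot B)))
      with (tG B (tjoin B (tneg B a) b)) by bsolve.
    eapply bt_trans; [apply (meet_mono _ _ _ _ _ bdlB); [apply bt_refl|apply PG_le]|].
    bsolve.
  - intros a b.
    replace (tjoin B (tneg B (ttop B)) (tP B (tmeet B a (tneg B b))))
      with (tP B (tmeet B a (tneg B b))) by bsolve.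
    eapply bt_trans; [|apply (join_mono _ _ _ _ _ bdlB); [apply bt_refl|apply GP_ge]].
    bsolve.
Qed.

End TB.

Lemma M_functor_ok : M_is_functor.
Proof.
  split; [intros; apply M_isWHB; auto|].
  intros B B' f HB HB' (h1 & h2 & h3 & h4 & h5 & h6 & h7).
  unfold WHBhom, Mmap; cbn. unfold tP.
  repeat split; intros; repeat (rewrite h1 || rewrite h2 || rewrite h3 || rewrite h4 || rewrite h5 || rewrite h6 || rewrite h7); reflexivity.
Qed.

Lemma compl_unique B (HB : isTBA B) y w :
  tmeet B y w = tbot B -> tjoin B y w = ttop B -> w = tneg B y.
Proof.
  intros H1 H2. apply beq; auto. intros Q HQ.
  rewrite (qneg B HB Q HQ).
  assert (A1 := f_equal Q H1). assert (A2 := f_equal Q H2).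
  rewrite (qmeet B HB Q HQ), (qbot B Q HQ) in A1.
  rewrite (qjoin B HB Q HQ), (qtop B Q HQ) in A2.
  split; intro H.
  - intro Hy. rewrite <- A1; auto.
  - assert (Q y \/ Q w) by (rewrite A2; auto). tauto.
Qed.

Lemma M_full_ok : M_full.
Proof.
  intros B B' f HB HB' (fm & fj & fi & fc & fb & ft). cbn in *.
  assert (fn : forall x, f (tneg B x) = tneg B' (f x)).
  { intro x. apply compl_unique; auto.
    - rewrite <- fm. replace (tmeet B x (tneg B x)) with (tbot B); auto.
      symmetry; apply HB.
    - rewrite <- fj. replace (tjoin B x (tneg B x)) with (ttop B); auto.
      symmetry; apply HB. }
  assert (fG : forall x, f (tG B x) = tG B' (f x)).
  { intro x. replace x with (tjoin B (tneg B (ttop B)) x) at 1.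
    - rewrite fi, ft. f_equal. apply beq; auto. intros Q HQ.
      rewrite (qjoin B' HB' Q HQ), (qneg B' HB' Q HQ), (qtop B' Q HQ). tauto.
    - apply beq; auto. intros Q HQ.
      rewrite (qjoin B HB Q HQ), (qneg B HB Q HQ), (qtop B Q HQ). tauto. }
  assert (fP : forall x, f (tP B x) = tP B' (f x)).
  { intro x. replace x with (tmeet B x (tneg B (tbot B))) at 1.
    - rewrite fc, fb. f_equal. apply beq; auto. intros Q HQ.
      rewrite (qmeet B' HB' Q HQ), (qneg B' HB' Q HQ), (qbot B' Q HQ). tauto.
    - apply beq; auto. intros Q HQ.
      rewrite (qmeet B HB Q HQ), (qneg B HB Q HQ), (qbot B Q HQ). tauto. }
  exists f. split; [|intros; reflexivity].
  repeat split; auto.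
  intro x. rewrite (H_eq B HB x), (H_eq B' HB' (f x)), fn, fP, fn. reflexivity.
Qed.

Lemma M_faithful_ok : M_faithful.
Proof. intros B B' f1 f2 _ _ _ _ H x. apply H. Qed.

Definition dnfp {W : Type} (l : list (W * W)) (p : W -> Prop) : Prop :=
  exists a b, In (a, b) l /\ p a /\ ~ p b.
Definition cnfp {W : Type} (l : list (W * W)) (p : W -> Prop) : Prop :=
  forall a b, In (a, b) l -> ~ p a \/ p b.

Lemma BA_ext (A : WHBraw) (U V : BA A) :
  (forall P, proj1_sig U P <-> proj1_sig V P) -> U = V.
Proof.
  destruct U as [U HU], V as [V HV]; simpl; intro H.
  assert (U = V) by (apply set_ext; intros t; apply H). subst.
  f_equal. apply proof_irrelevance.
Qed.

Lemma toB_app (A : WHBraw) S : inB A S -> proj1_sig (toB A S) = S.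
Proof.
  intro H. unfold toB. destruct excluded_middle_informative; [reflexivity|contradiction].
Qed.

Section WA.
Variable A : WHBraw.
Hypothesis HWA : isWHB A.

Notation m := (wmeet A). Notation jn := (wjoin A). Notation im := (wimp A).
Notation co := (wcoimp A). Notation z := (wbot A). Notation o := (wtop A).
Notation lea := (le (wcar A) (wmeet A)).

Lemma bdlA : is_bdl m jn z o. Proof. apply HWA. Qed.
Lemma ax_ii a : im a a = o. Proof. destruct HWA as (_ & H & _); apply H. Qed.
Lemma ax_im a b d : im a (m b d) = m (im a b) (im a d).
Proof. destruct HWA as (_ & _ & H & _); apply H. Qed.
Lemma ax_ij a b d : im (jn a b) d = m (im a d) (im b d).
Proof. destruct HWA as (_ & _ & _ & H & _); apply H. Qed.
Lemma ax_itr a b d : lea (m (im a b) (im b d)) (im a d).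
Proof. destruct HWA as (_ & _ & _ & _ & H & _); apply H. Qed.
Lemma ax_cc a : co a a = z.
Proof. destruct HWA as (_ & _ & _ & _ & _ & H & _); apply H. Qed.
Lemma ax_cj a b d : co (jn a b) d = jn (co a d) (co b d).
Proof. destruct HWA as (_ & _ & _ & _ & _ & _ & H & _); apply H. Qed.
Lemma ax_cm a b d : co a (m b d) = jn (co a b) (co a d).
Proof. destruct HWA as (_ & _ & _ & _ & _ & _ & _ & H & _); apply H. Qed.
Lemma ax_ctr a b d : lea (co a d) (jn (co a b) (co b d)).
Proof. destruct HWA as (_ & _ & _ & _ & _ & _ & _ & _ & H & _); apply H. Qed.
Lemma ax_9 a b : lea (m a (co (im a b) z)) b.
Proof. destruct HWA as (_ & _ & _ & _ & _ & _ & _ & _ & _ & H & _); apply H. Qed.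
Lemma ax_10 a b : lea a (jn b (im o (co a b))).
Proof. destruct HWA as (_ & _ & _ & _ & _ & _ & _ & _ & _ & _ & H); apply H. Qed.

Lemma imp_mono2 a b d : lea b d -> lea (im a b) (im a d).
Proof. intro H. unfold le at 1. rewrite <- ax_im, H. reflexivity. Qed.
Lemma imp_anti1 a a' b : lea a a' -> lea (im a' b) (im a b).
Proof.
  intro H. apply (le_join _ _ _ _ _ bdlA) in H. rewrite <- H, ax_ij.
  apply (meet_lb1 _ _ _ _ _ bdlA).
Qed.
Lemma imp_top a : im a o = o.
Proof.
  apply (le_antisym _ _ _ _ _ bdlA); [apply (le_top _ _ _ _ _ bdlA)|].
  rewrite <- (ax_ii a) at 1. apply imp_mono2, (le_top _ _ _ _ _ bdlA).
Qed.
Lemma imp_1 a y : lea (im o y) (im a y).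
Proof.
  eapply (le_trans _ _ _ _ _ bdlA); [|apply (ax_itr a o y)].
  rewrite imp_top. rewrite (mC _ _ _ _ _ bdlA). rewrite (mo _ _ _ _ _ bdlA).
  apply (le_refl _ _ _ _ _ bdlA).
Qed.
Lemma imp_meet_self a w : im a (m a w) = im a w.
Proof.
  rewrite ax_im, ax_ii, (mC _ _ _ _ _ bdlA), (mo _ _ _ _ _ bdlA). reflexivity.
Qed.
Lemma co_mono1 a a' b : lea a a' -> lea (co a b) (co a' b).
Proof.
  intro H. apply (le_join _ _ _ _ _ bdlA) in H. rewrite <- H, ax_cj.
  apply (join_ub1 _ _ _ _ _ bdlA).
Qed.
Lemma co_anti2 a b b' : lea b b' -> lea (co a b') (co a b).
Proof.
  intro H. unfold le in H. rewrite <- H. rewrite ax_cm.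
  apply (join_ub2 _ _ _ _ _ bdlA).
Qed.

Definition pf (P : X A) : wcar A -> Prop := proj1_sig P.
Definition aprime := gprime (wcar A) m jn z o.
Lemma pfg (P : X A) : aprime (pf P). Proof. exact (proj2_sig P). Qed.
Definition mkX (Q : wcar A -> Prop) (H : aprime Q) : X A := exist _ Q H.

Lemma pmeet P a b : pf P (m a b) <-> pf P a /\ pf P b.
Proof. apply (gp_meet _ _ _ _ _ bdlA), pfg. Qed.
Lemma pjoin P a b : pf P (jn a b) <-> pf P a \/ pf P b.
Proof. apply (gp_join _ _ _ _ _ bdlA), pfg. Qed.
Lemma ple P a b : lea a b -> pf P a -> pf P b.
Proof. intro H. apply (gp_le _ _ _ _ _ _ a b (pfg P) H). Qed.
Lemma ptop P : pf P o. Proof. apply (pfg P). Qed.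
Lemma pbot P : ~ pf P z. Proof. apply (pfg P). Qed.

Lemma R_to_S P Q : RA A P Q -> SA A Q P.
Proof.
  intros H a b Ha Hb.
  assert (H1 : pf P (jn b (im o (co a b)))) by (eapply ple; [apply ax_10|]; auto).
  apply pjoin in H1. destruct H1 as [H1|H1]; [contradiction|].
  apply (H o); auto. apply ptop.
Qed.

Lemma S_to_R P Q : SA A P Q -> RA A Q P.
Proof.
  intros H a b Hab Ha.
  assert (H1 : pf P (co (im a b) z)) by (apply H; auto; apply pbot).
  eapply ple; [apply (ax_9 a b)|]. apply pmeet; auto.
Qed.

Lemma E1 P a b : ~ pf P (im a b) -> exists Q, RA A P Q /\ pf Q a /\ ~ pf Q b.
Proof.
  intro Hn.
  destruct (PFT _ _ _ _ _ bdlA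
     (fun y => exists x t, pf P x /\ ~ pf P t /\ lea (m a (co x t)) y)
     (fun y => lea y b)) as (Q & HQ & HFQ & HQI).
  - split; [|split].
    + exists o, z. split; [apply ptop|split; [apply pbot|apply (le_top _ _ _ _ _ bdlA)]].
    + intros a' b' (x & t & Hx & Ht & Hl) Hab. exists x, t. split; auto. split; auto.
      eapply (le_trans _ _ _ _ _ bdlA); eauto.
    + intros a' b' (x1 & t1 & Hx1 & Ht1 & Hl1) (x2 & t2 & Hx2 & Ht2 & Hl2).
      exists (m x1 x2), (jn t1 t2). split; [apply pmeet; auto|split].
      * intro H. apply pjoin in H. tauto.
      * apply (meet_glb _ _ _ _ _ bdlA).
        -- eapply (le_trans _ _ _ _ _ bdlA); [|apply Hl1].
           apply (meet_mono _ _ _ _ _ bdlA); [apply (le_refl _ _ _ _ _ bdlA)|].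
           eapply (le_trans _ _ _ _ _ bdlA); [apply co_mono1, (meet_lb1 _ _ _ _ _ bdlA)|].
           apply co_anti2, (join_ub1 _ _ _ _ _ bdlA).
        -- eapply (le_trans _ _ _ _ _ bdlA); [|apply Hl2].
           apply (meet_mono _ _ _ _ _ bdlA); [apply (le_refl _ _ _ _ _ bdlA)|].
           eapply (le_trans _ _ _ _ _ bdlA); [apply co_mono1, (meet_lb2 _ _ _ _ _ bdlA)|].
           apply co_anti2, (join_ub2 _ _ _ _ _ bdlA).
  - split; [apply (le_bot _ _ _ _ _ bdlA)|split].
    + intros; eapply (le_trans _ _ _ _ _ bdlA); eauto.
    + intros; apply (join_lub _ _ _ _ _ bdlA); auto.
  - intros y (x & t & Hx & Ht & Hl) Hy. apply Hn.
    assert (H1 : pf P (jn t (im o (co x t)))) by (eapply ple; [apply ax_10|]; auto).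
    apply pjoin in H1. destruct H1 as [H1|H1]; [contradiction|].
    eapply ple; [apply imp_mono2; eapply (le_trans _ _ _ _ _ bdlA); [apply Hl|apply Hy]|].
    rewrite imp_meet_self. eapply ple; [apply imp_1|]. auto.
  - exists (mkX Q HQ). split; [|split].
    + apply S_to_R. intros x t Hx Ht. apply HFQ. exists x, t.
      split; auto. split; auto. apply (meet_lb2 _ _ _ _ _ bdlA).
    + apply HFQ. exists o, z. split; [apply ptop|split; [apply pbot|]].
      apply (meet_lb1 _ _ _ _ _ bdlA).
    + intro Hb. apply (HQI b Hb). apply (le_refl _ _ _ _ _ bdlA).
Qed.

Lemma E2 P a b : pf P (co a b) -> exists Q, SA A P Q /\ pf Q a /\ ~ pf Q b.
Proof.
  intro Hp.
  destruct (PFT _ _ _ _ _ bdlA (fun y => lea a y)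
     (fun y => exists x t, pf P x /\ ~ pf P t /\ lea y (jn (im x t) b)))
     as (Q & HQ & HFQ & HQI).
  - split; [apply (le_top _ _ _ _ _ bdlA)|split].
    + intros; eapply (le_trans _ _ _ _ _ bdlA); eauto.
    + intros; apply (meet_glb _ _ _ _ _ bdlA); auto.
  - split; [|split].
    + exists o, z. split; [apply ptop|split; [apply pbot|apply (le_bot _ _ _ _ _ bdlA)]].
    + intros a' b' (x & t & Hx & Ht & Hl) Hab. exists x, t. split; auto. split; auto.
      eapply (le_trans _ _ _ _ _ bdlA); eauto.
    + intros a' b' (x1 & t1 & Hx1 & Ht1 & Hl1) (x2 & t2 & Hx2 & Ht2 & Hl2).
      exists (m x1 x2), (jn t1 t2). split; [apply pmeet; auto|split].
      * intro H. apply pjoin in H. tauto.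
      * apply (join_lub _ _ _ _ _ bdlA).
        -- eapply (le_trans _ _ _ _ _ bdlA); [apply Hl1|].
           apply (join_mono _ _ _ _ _ bdlA); [|apply (le_refl _ _ _ _ _ bdlA)].
           eapply (le_trans _ _ _ _ _ bdlA); [apply imp_mono2, (join_ub1 _ _ _ _ _ bdlA)|].
           apply imp_anti1, (meet_lb1 _ _ _ _ _ bdlA).
        -- eapply (le_trans _ _ _ _ _ bdlA); [apply Hl2|].
           apply (join_mono _ _ _ _ _ bdlA); [|apply (le_refl _ _ _ _ _ bdlA)].
           eapply (le_trans _ _ _ _ _ bdlA); [apply imp_mono2, (join_ub2 _ _ _ _ _ bdlA)|].
           apply imp_anti1, (meet_lb2 _ _ _ _ _ bdlA).
  - intros y Hay (x & t & Hx & Ht & Hl). apply Ht.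
    assert (Hle : lea a (jn (im x t) b)) by (eapply (le_trans _ _ _ _ _ bdlA); eauto).
    assert (H1 : pf P (co (im x t) z)).
    { eapply ple; [|apply Hp].
      eapply (le_trans _ _ _ _ _ bdlA); [apply co_mono1, Hle|].
      rewrite ax_cj, ax_cc, (jz _ _ _ _ _ bdlA).
      apply co_anti2, (le_bot _ _ _ _ _ bdlA). }
    eapply ple; [apply (ax_9 x t)|]. apply pmeet; auto.
  - exists (mkX Q HQ). split; [|split].
    + apply R_to_S. intros x t Hxt Hx. apply NNPP. intro Ht.
      apply (HQI (im x t) Hxt). exists x, t. split; auto. split; auto.
      apply (join_ub1 _ _ _ _ _ bdlA).
    + apply HFQ, (le_refl _ _ _ _ _ bdlA).
    + intro Hb. apply (HQI b Hb). exists o, z. split; [apply ptop|split; [apply pbot|]].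
      apply (join_ub2 _ _ _ _ _ bdlA).
Qed.

Lemma G_imp P a b : GA A (fun Q => ~ pf Q a \/ pf Q b) P <-> pf P (im a b).
Proof.
  split.
  - intro H. apply NNPP. intro Hn. destruct (E1 P a b Hn) as (Q & HR & Ha & Hb).
    destruct (H Q HR); auto.
  - intros H Q HR. destruct (classic (pf Q a)); auto. right. eapply HR; eauto.
Qed.

Lemma H_coimp P a b : HA A (fun Q => ~ pf Q a \/ pf Q b) P <-> ~ pf P (co a b).
Proof.
  split.
  - intros H Hc. destruct (E2 P a b Hc) as (Q & HS & Ha & Hb).
    destruct (H Q HS); auto.
  - intros H Q HS. destruct (classic (pf Q a)); auto. right. apply NNPP. intro Hb.
    apply H. apply HS; auto.
Qed.

End WA.

Lemma inB_ext (A : WHBraw) (U V : X A -> Prop) :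
  inB A U -> (forall P, U P <-> V P) -> inB A V.
Proof.
  intros (l & Hl) H. exists l. intro P. rewrite <- H. apply Hl.
Qed.

Lemma GA_ext (A : WHBraw) (U V : X A -> Prop) P :
  (forall Q, U Q <-> V Q) -> (GA A U P <-> GA A V P).
Proof. intro H. unfold GA. split; intros H1 Q HQ; apply H; auto. Qed.
Lemma HA_ext (A : WHBraw) (U V : X A -> Prop) P :
  (forall Q, U Q <-> V Q) -> (HA A U P <-> HA A V P).
Proof. intro H. unfold HA. split; intros H1 Q HQ; apply H; auto. Qed.

Definition prodl {W : Type} (mm jj : W -> W -> W) (l1 l2 : list (W * W)) :=
  flat_map (fun p => map (fun q => (mm (fst p) (fst q), jj (snd p) (snd q))) l2) l1.

Section WB.
Variable A : WHBraw.
Hypothesis HWA : isWHB A.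

Notation m := (wmeet A). Notation jn := (wjoin A). Notation im := (wimp A).
Notation co := (wcoimp A). Notation z := (wbot A). Notation o := (wtop A).

Lemma inBi U : inB A U <-> exists l, forall P, U P <-> dnfp l (pf A P).
Proof. reflexivity. Qed.

Lemma inB_dnf l : inB A (fun P => dnfp l (pf A P)).
Proof. exists l. intro P. reflexivity. Qed.

Lemma inB_union U V : inB A U -> inB A V -> inB A (fun P => U P \/ V P).
Proof.
  rewrite !inBi. intros (l1 & H1) (l2 & H2). exists (l1 ++ l2). intro P. rewrite H1, H2.
  split.
  - intros [(a & b & Hi & Ha & Hb)|(a & b & Hi & Ha & Hb)]; exists a, b;
      rewrite in_app_iff; auto.
  - intros (a & b & Hi & Ha & Hb). rewrite in_app_iff in Hi.
    destruct Hi; [left|right]; exists a, b; auto.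
Qed.

Lemma inB_inter U V : inB A U -> inB A V -> inB A (fun P => U P /\ V P).
Proof.
  rewrite !inBi. intros (l1 & H1) (l2 & H2). exists (prodl m jn l1 l2). intro P. rewrite H1, H2.
  unfold prodl. split.
  - intros [(a & b & Hi & Ha & Hb) (c & d & Hi' & Hc & Hd)].
    exists (m a c), (jn b d). split.
    + apply in_flat_map. exists (a, b). split; auto. apply in_map_iff.
      exists (c, d); auto.
    + split; [apply (pmeet A HWA); auto|]. rewrite (pjoin A HWA). tauto.
  - intros (a & b & Hi & Ha & Hb). apply in_flat_map in Hi.
    destruct Hi as ((a1, b1) & Hi1 & Hi2). apply in_map_iff in Hi2.
    destruct Hi2 as ((a2, b2) & He & Hi2). simpl in He. injection He; intros; subst.
    rewrite (pmeet A HWA) in Ha. rewrite (pjoin A HWA) in Hb.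
    split; [exists a1, b1|exists a2, b2]; tauto.
Qed.

Lemma inB_true : inB A (fun _ => True).
Proof.
  apply inBi. exists [(o, z)]. intro P. split; auto. intros _. exists o, z.
  split; [left; auto|split; [apply ptop|apply pbot]].
Qed.

Lemma inB_sig a : inB A (fun P => pf A P a).
Proof.
  apply inBi. exists [(a, z)]. intro P. split.
  - intro H. exists a, z. split; [left; auto|split; auto; apply pbot].
  - intros (a' & b' & [He|[]] & H1 & H2). injection He; intros; subst; auto.
Qed.

Lemma inB_compl_dnf l : inB A (fun P => ~ dnfp l (pf A P)).
Proof.
  induction l as [|(a, b) l IH].
  - eapply inB_ext; [apply inB_true|]. intro P. split; auto.
    intros _ (a & b & [] & _).
  - eapply inB_ext; [apply inB_inter; [apply (inB_dnf [(o, a); (b, z)])|apply IH]|].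
    intro P. split.
    + intros [(a' & b' & Hi & H1 & H2) H3] (a'' & b'' & Hi' & H4 & H5).
      destruct Hi' as [He|Hi'].
      * injection He; intros; subst.
        destruct Hi as [He'|[He'|[]]]; injection He'; intros; subst; auto.
        all: try (exfalso; apply (pbot A P); auto).
      * apply H3. exists a'', b''. auto.
    + intro H. split.
      * destruct (classic (pf A P a)) as [Ha|Ha].
        -- destruct (classic (pf A P b)) as [Hb|Hb].
           ++ exists b, z. split; [right; left; auto|split; auto; apply pbot].
           ++ exfalso. apply H. exists a, b. split; [left; auto|auto].
        -- exists o, a. split; [left; auto|split; auto; apply ptop].
      * intros (a' & b' & Hi & H1 & H2). apply H. exists a', b'. split; [right; auto|auto].
Qed.

Lemma inB_compl U : inB A U -> inB A (fun P => ~ U P).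
Proof.
  rewrite inBi. intros (l & Hl). eapply inB_ext; [apply (inB_compl_dnf l)|].
  intro P. rewrite Hl. tauto.
Qed.

Lemma cnf_dnf {W : Type} (l : list (W * W)) p : cnfp l p <-> ~ dnfp l p.
Proof.
  unfold cnfp, dnfp. split.
  - intros H (a & b & Hi & H1 & H2). destruct (H a b Hi); auto.
  - intros H a b Hi. destruct (classic (p a)); auto. right. apply NNPP. intro Hb.
    apply H. exists a, b. auto.
Qed.

Lemma inB_cnf l : inB A (fun P => cnfp l (pf A P)).
Proof.
  eapply inB_ext; [apply (inB_compl_dnf l)|]. intro P. rewrite cnf_dnf. tauto.
Qed.

Lemma inB_to_cnf U : inB A U -> exists l, forall P, U P <-> cnfp l (pf A P).
Proof.
  intro H. destruct (proj1 (inBi _) (inB_compl U H)) as (l & Hl). exists l. intro P.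
  rewrite cnf_dnf. rewrite <- Hl. tauto.
Qed.

Lemma inB_forall (l : list (wcar A * wcar A)) (F : wcar A -> wcar A -> X A -> Prop) :
  (forall a b, inB A (F a b)) -> inB A (fun P => forall a b, In (a, b) l -> F a b P).
Proof.
  intro HF. induction l as [|(a, b) l IH].
  - eapply inB_ext; [apply inB_true|]. intro P; split; auto. intros _ a b [].
  - eapply inB_ext; [apply inB_inter; [apply (HF a b)|apply IH]|].
    intro P. split.
    + intros [H1 H2] a' b' [He|Hi]; [injection He; intros; subst; auto|auto].
    + intro H. split; [apply H; left; auto|intros; apply H; right; auto].
Qed.

Lemma G_cnf U l : (forall P, U P <-> cnfp l (pf A P)) ->
  forall P, GA A U P <-> (forall a b, In (a, b) l -> pf A P (im a b)).
Proof.
  intros HU P. split.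
  - intros H a b Hi. apply (G_imp A HWA). intros Q HR. apply HU; auto.
  - intros H Q HR. apply HU. intros a b Hi.
    apply (G_imp A HWA P a b); auto.
Qed.

Lemma H_cnf U l : (forall P, U P <-> cnfp l (pf A P)) ->
  forall P, HA A U P <-> (forall a b, In (a, b) l -> ~ pf A P (co a b)).
Proof.
  intros HU P. split.
  - intros H a b Hi. apply (H_coimp A HWA). intros Q HS. apply HU; auto.
  - intros H Q HS. apply HU. intros a b Hi.
    apply (H_coimp A HWA P a b); auto.
Qed.

Lemma inB_G U : inB A U -> inB A (GA A U).
Proof.
  intro H. destruct (inB_to_cnf U H) as (l & Hl).
  eapply inB_ext; [apply (inB_forall l (fun a b P => pf A P (im a b)))|].
  - intros; apply inB_sig.
  - intro P. rewrite (G_cnf U l Hl). tauto.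
Qed.

Lemma inB_H U : inB A U -> inB A (HA A U).
Proof.
  intro H. destruct (inB_to_cnf U H) as (l & Hl).
  eapply inB_ext; [apply (inB_forall l (fun a b P => ~ pf A P (co a b)))|].
  - intros; apply inB_compl, inB_sig.
  - intro P. rewrite (H_cnf U l Hl). tauto.
Qed.

Lemma T_obj_ok_A : T_obj_ok A.
Proof.
  split; [apply inB_empty|split; [apply inB_true|]].
  intros U V. split; [|split; [|split; [|split]]].
  - apply inB_inter; apply (proj2_sig _).
  - apply inB_union; apply (proj2_sig _).
  - apply inB_compl; apply (proj2_sig _).
  - apply inB_G; apply (proj2_sig _).
  - apply inB_H; apply (proj2_sig _).
Qed.

Lemma mT_meet U V : proj1_sig (tmeet (T A) U V) = fun P => proj1_sig U P /\ proj1_sig V P.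
Proof. cbn. rewrite toB_app; auto. apply inB_inter; apply (proj2_sig _). Qed.
Lemma mT_join U V : proj1_sig (tjoin (T A) U V) = fun P => proj1_sig U P \/ proj1_sig V P.
Proof. cbn. rewrite toB_app; auto. apply inB_union; apply (proj2_sig _). Qed.
Lemma mT_neg U : proj1_sig (tneg (T A) U) = fun P => ~ proj1_sig U P.
Proof. cbn. rewrite toB_app; auto. apply inB_compl; apply (proj2_sig _). Qed.
Lemma mT_bot : proj1_sig (tbot (T A)) = fun P => False.
Proof. cbn. rewrite toB_app; auto. apply inB_empty. Qed.
Lemma mT_top : proj1_sig (ttop (T A)) = fun P => True.
Proof. cbn. rewrite toB_app; auto. apply inB_true. Qed.
Lemma mT_G U : proj1_sig (tG (T A) U) = GA A (proj1_sig U).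
Proof. cbn. rewrite toB_app; auto. apply inB_G; apply (proj2_sig _). Qed.
Lemma mT_H U : proj1_sig (tH (T A) U) = HA A (proj1_sig U).
Proof. cbn. rewrite toB_app; auto. apply inB_H; apply (proj2_sig _). Qed.

Ltac mT := repeat (rewrite mT_meet || rewrite mT_join || rewrite mT_neg || rewrite mT_bot
  || rewrite mT_top || rewrite mT_G || rewrite mT_H); cbv beta.
Ltac Tsolve := apply BA_ext; intro; mT; tauto.

Lemma tle_T U V : tle (T A) U V <-> forall P, proj1_sig U P -> proj1_sig V P.
Proof.
  unfold tle. split.
  - intros H P HU. rewrite <- H in HU. rewrite mT_meet in HU. apply HU.
  - intro H. apply BA_ext. intro P. mT. split; [tauto|]. intro; split; auto.
Qed.

Lemma T_isTBA : isTBA (T A).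
Proof.
  split; [|split; [|split; [|split]]].
  - repeat split; intros; Tsolve.
  - intro; Tsolve.
  - intro; Tsolve.
  - intros x y. rewrite !tle_T. unfold tP. mT. unfold GA, HA. split.
    + intros H P Hx Q HR. apply H. intro Hn. apply (Hn P); auto. apply R_to_S; auto.
    + intros H P Hn. apply NNPP. intro Hy. apply Hn. intros Q HS Hx.
      apply Hy. apply (H Q Hx). apply S_to_R; auto.
  - intros x y. rewrite !tle_T. unfold tF. mT. unfold GA, HA. split.
    + intros H P Hx Q HS. apply H. intro Hn. apply (Hn P); auto. apply S_to_R; auto.
    + intros H P Hn. apply NNPP. intro Hy. apply Hn. intros Q HR Hx.
      apply Hy. apply (H Q Hx). apply R_to_S; auto.
Qed.

Definition sig_hat (a : wcar A) : BA A := toB A (sigmaA A a).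
Lemma mT_sig a : proj1_sig (sig_hat a) = fun P => pf A P a.
Proof. unfold sig_hat. rewrite toB_app; auto. apply inB_sig. Qed.

Ltac mT' := repeat (rewrite mT_meet || rewrite mT_join || rewrite mT_neg || rewrite mT_bot
  || rewrite mT_top || rewrite mT_G || rewrite mT_H || rewrite mT_sig); cbv beta.

Lemma sh_meet a b : sig_hat (m a b) = tmeet (T A) (sig_hat a) (sig_hat b).
Proof. apply BA_ext; intro P; mT'. apply (pmeet A HWA). Qed.
Lemma sh_join a b : sig_hat (jn a b) = tjoin (T A) (sig_hat a) (sig_hat b).
Proof. apply BA_ext; intro P; mT'. apply (pjoin A HWA). Qed.
Lemma sh_bot : sig_hat z = tbot (T A).
Proof. apply BA_ext; intro P; mT'. split; [apply pbot|intros []]. Qed.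
Lemma sh_top : sig_hat o = ttop (T A).
Proof. apply BA_ext; intro P; mT'. split; auto. intros _; apply ptop. Qed.
Lemma sh_imp a b :
  sig_hat (im a b) = tG (T A) (tjoin (T A) (tneg (T A) (sig_hat a)) (sig_hat b)).
Proof. apply BA_ext; intro P; mT'. rewrite (G_imp A HWA). tauto. Qed.
Lemma sh_coimp a b :
  sig_hat (co a b) = tP (T A) (tmeet (T A) (sig_hat a) (tneg (T A) (sig_hat b))).
Proof.
  apply BA_ext; intro P; unfold tP; mT'.
  rewrite (HA_ext A _ (fun Q => ~ pf A Q a \/ pf A Q b)); [|intro; tauto].
  rewrite (H_coimp A HWA). tauto.
Qed.

Definition dnfB (l : list (wcar A * wcar A)) : BA A :=
  fold_right (fun q acc => tjoin (T A) (tmeet (T A) (sig_hat (fst q))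
     (tneg (T A) (sig_hat (snd q)))) acc) (tbot (T A)) l.
Definition cnfB (l : list (wcar A * wcar A)) : BA A :=
  fold_right (fun q acc => tmeet (T A) (tjoin (T A) (tneg (T A) (sig_hat (fst q)))
     (sig_hat (snd q))) acc) (ttop (T A)) l.

Lemma mT_dnfB l : proj1_sig (dnfB l) = fun P => dnfp l (pf A P).
Proof.
  apply functional_extensionality; intro P. apply propositional_extensionality.
  unfold dnfB, cnfB.
  induction l as [|(a, b) l IH]; cbn [fold_right fst snd]; mT'.
  - split; [intros []|intros (a & b & [] & _)].
  - rewrite IH. split.
    + intros [[H1 H2]|(a' & b' & Hi & H1 & H2)]; [exists a, b; split; [left|]; auto|].
      exists a', b'. split; [right|]; auto.
    + intros (a' & b' & [He|Hi] & H1 & H2); [injection He; intros; subst; auto|].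
      right. exists a', b'. auto.
Qed.

Lemma mT_cnfB l : proj1_sig (cnfB l) = fun P => cnfp l (pf A P).
Proof.
  apply functional_extensionality; intro P. apply propositional_extensionality.
  unfold dnfB, cnfB.
  induction l as [|(a, b) l IH]; cbn [fold_right fst snd]; mT'.
  - split; auto. intros _ a b [].
  - rewrite IH. split.
    + intros [H1 H2] a' b' [He|Hi]; [injection He; intros; subst; auto|auto].
    + intro H. split; [apply H; left; auto|intros a' b' Hi; apply H; right; auto].
Qed.

Lemma BA_dnf (U : BA A) : exists l, U = dnfB l.
Proof.
  destruct (proj1 (inBi _) (proj2_sig U)) as (l & Hl). exists l. apply BA_ext. intro P.
  rewrite mT_dnfB. apply Hl.
Qed.

Lemma BA_cnf (U : BA A) : exists l, U = cnfB l.
Proof.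
  destruct (inB_to_cnf _ (proj2_sig U)) as (l & Hl). exists l. apply BA_ext. intro P.
  rewrite mT_cnfB. apply Hl.
Qed.

Lemma G_cnfB_nil : tG (T A) (cnfB []) = ttop (T A).
Proof. apply BA_ext; intro P; unfold cnfB; cbn [fold_right]; mT'. unfold GA. split; auto. Qed.
Lemma H_cnfB_nil : tH (T A) (cnfB []) = ttop (T A).
Proof. apply BA_ext; intro P; unfold cnfB; cbn [fold_right]; mT'. unfold HA. split; auto. Qed.

Lemma G_cnfB_cons a b l : tG (T A) (cnfB ((a, b) :: l)) =
  tmeet (T A) (sig_hat (im a b)) (tG (T A) (cnfB l)).
Proof.
  apply BA_ext; intro P. rewrite mT_G, mT_meet, mT_sig, mT_G, !mT_cnfB. cbv beta.
  rewrite (G_cnf _ ((a, b) :: l)) by (intro; reflexivity).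
  rewrite (G_cnf _ l) by (intro; reflexivity). simpl. split.
  - intro H. split; [apply H; left; auto|intros; apply H; right; auto].
  - intros [H1 H2] a' b' [He|Hi]; [injection He; intros; subst; auto|auto].
Qed.

Lemma H_cnfB_cons a b l : tH (T A) (cnfB ((a, b) :: l)) =
  tmeet (T A) (tneg (T A) (sig_hat (co a b))) (tH (T A) (cnfB l)).
Proof.
  apply BA_ext; intro P. rewrite mT_H, mT_meet, mT_neg, mT_sig, mT_H, !mT_cnfB. cbv beta.
  rewrite (H_cnf _ ((a, b) :: l)) by (intro; reflexivity).
  rewrite (H_cnf _ l) by (intro; reflexivity). simpl. split.
  - intro H. split; [apply H; left; auto|intros; apply H; right; auto].
  - intros [H1 H2] a' b' [He|Hi]; [injection He; intros; subst; auto|auto].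
Qed.

End WB.

Lemma X_ext (A : WHBraw) (P P' : X A) : (forall a, pf A P a <-> pf A P' a) -> P = P'.
Proof.
  destruct P as [P HP], P' as [P' HP']; unfold pf; simpl; intro H.
  assert (P = P') by (apply set_ext; intros t; apply H). subst.
  f_equal. apply proof_irrelevance.
Qed.

Section TM.
Variables A A' : WHBraw.
Variable h : wcar A -> wcar A'.
Hypothesis HWA : isWHB A.
Hypothesis HWA' : isWHB A'.
Hypothesis Hh : WHBhom A A' h.

Lemma h_le a b : le _ (wmeet A) a b -> le _ (wmeet A') (h a) (h b).
Proof. unfold le. intro H. destruct Hh as (H1 & _). rewrite <- H1, H. reflexivity. Qed.

Lemma pre_prime (Q : X A') : prime_filter A (fun a => proj1_sig Q (h a)).
Proof.
  destruct Hh as (H1 & H2 & H3 & H4 & H5 & H6).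
  destruct (proj2_sig Q) as (Q1 & Q2 & Q3 & Q4 & Q5).
  split; [rewrite H6; auto|split; [rewrite H5; auto|split; [|split]]].
  - intros a b Ha Hab. eapply Q3; [apply Ha|]. apply h_le; auto.
  - intros a b Ha Hb. rewrite H1. auto.
  - intros a b Hab. rewrite H2 in Hab. auto.
Qed.

Definition pre (Q : X A') : X A := exist _ (fun a => proj1_sig Q (h a)) (pre_prime Q).

Lemma Tmap_raw_iff U Q : Tmap_raw A A' h U Q <-> proj1_sig U (pre Q).
Proof.
  unfold Tmap_raw, pre. split.
  - intros (p & Hp). replace (pre_prime Q) with p by apply proof_irrelevance. auto.
  - intro H. exists (pre_prime Q). auto.
Qed.

Lemma T_map_ok_h : T_map_ok A A' h.
Proof.
  intro U. destruct (proj1 (inBi A _) (proj2_sig U)) as (l & Hl).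
  apply inBi. exists (map (fun q => (h (fst q), h (snd q))) l). intro Q.
  rewrite Tmap_raw_iff, Hl. unfold dnfp. split.
  - intros (a & b & Hi & H1 & H2). exists (h a), (h b). split; auto.
    apply in_map_iff. exists (a, b); auto.
  - intros (a & b & Hi & H1 & H2). apply in_map_iff in Hi.
    destruct Hi as ((a', b') & He & Hi). simpl in He. injection He; intros; subst.
    exists a', b'. auto.
Qed.

Lemma mTm U : proj1_sig (Tmap A A' h U) = fun Q => proj1_sig U (pre Q).
Proof.
  unfold Tmap. rewrite toB_app; [|apply T_map_ok_h].
  apply functional_extensionality; intro Q. apply propositional_extensionality.
  apply Tmap_raw_iff.
Qed.

Lemma cnfp_map l p :
  cnfp (map (fun q => (h (fst q), h (snd q))) l) p <-> cnfp l (fun a => p (h a)).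
Proof.
  unfold cnfp. split.
  - intros H a b Hi. apply H. apply in_map_iff. exists (a, b); auto.
  - intros H a b Hi. apply in_map_iff in Hi.
    destruct Hi as ((a', b') & He & Hi). simpl in He. injection He; intros; subst. auto.
Qed.

Ltac mTT := repeat (rewrite (mT_meet A HWA) || rewrite (mT_join A) || rewrite (mT_neg A HWA)
  || rewrite (mT_bot A) || rewrite (mT_top A) || rewrite (mT_G A HWA)
  || rewrite (mT_H A HWA) || rewrite (mT_sig A)
  || rewrite (mT_meet A' HWA') || rewrite (mT_join A') || rewrite (mT_neg A' HWA')
  || rewrite (mT_bot A') || rewrite (mT_top A') || rewrite (mT_G A' HWA')
  || rewrite (mT_H A' HWA') || rewrite (mT_sig A') || rewrite mTm); cbv beta.

Lemma Tmap_hom : TBAhom (T A) (T A') (Tmap A A' h).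
Proof.
  destruct Hh as (H1 & H2 & H3 & H4 & H5 & H6).
  split; [|split; [|split; [|split; [|split; [|split]]]]];
    intros; apply BA_ext; intro Q; mTT; try tauto.
  - destruct (inB_to_cnf A HWA _ (proj2_sig x)) as (l & Hl).
    rewrite (G_cnf A HWA _ l Hl).
    rewrite (G_cnf A' HWA' _ (map (fun q => (h (fst q), h (snd q))) l)).
    + split.
      * intros H a' b' Hi. apply in_map_iff in Hi.
        destruct Hi as ((a, b) & He & Hi). simpl in He. injection He; intros; subst.
        rewrite <- H3. apply (H a b Hi).
      * intros H a b Hi. simpl. rewrite H3. apply H. apply in_map_iff. exists (a, b); auto.
    + intro Q'. rewrite cnfp_map. apply Hl.
  - destruct (inB_to_cnf A HWA _ (proj2_sig x)) as (l & Hl).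
    rewrite (H_cnf A HWA _ l Hl).
    rewrite (H_cnf A' HWA' _ (map (fun q => (h (fst q), h (snd q))) l)).
    + split.
      * intros H a' b' Hi. apply in_map_iff in Hi.
        destruct Hi as ((a, b) & He & Hi). simpl in He. injection He; intros; subst.
        rewrite <- H4. apply (H a b Hi).
      * intros H a b Hi. simpl. rewrite H4. apply H. apply in_map_iff. exists (a, b); auto.
    + intro Q'. rewrite cnfp_map. apply Hl.
Qed.

Lemma Tmap_sig a : Tmap A A' h (sig_hat A a) = sig_hat A' (h a).
Proof. apply BA_ext; intro Q. mTT. simpl. reflexivity. Qed.

End TM.

Lemma hom_id A : WHBhom A A (fun a => a).
Proof. repeat split. Qed.

Lemma hom_comp A A' A'' h h' : WHBhom A A' h -> WHBhom A' A'' h' ->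
  WHBhom A A'' (fun a => h' (h a)).
Proof.
  intros (H1 & H2 & H3 & H4 & H5 & H6) (H1' & H2' & H3' & H4' & H5' & H6').
  repeat split; intros;
  repeat (rewrite H1 || rewrite H2 || rewrite H3 || rewrite H4 || rewrite H5 || rewrite H6);
  repeat (rewrite H1' || rewrite H2' || rewrite H3' || rewrite H4' || rewrite H5' || rewrite H6');
  reflexivity.
Qed.

Lemma T_functor_ok : T_is_functor.
Proof.
  split; [|split; [|split]].
  - intros A HA. split; [apply T_obj_ok_A; auto|apply T_isTBA; auto].
  - intros A A' h HA HA' Hh. split; [apply T_map_ok_h; auto|apply Tmap_hom; auto].
  - intros A HA U. apply BA_ext. intro P. rewrite (mTm _ _ _ (hom_id A)).
    replace (pre A A (fun a => a) (hom_id A) P) with P; [tauto|].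
    apply X_ext. intro a. reflexivity.
  - intros A A' A'' h h' HA HA' HA'' Hh Hh' U. apply BA_ext. intro Q.
    rewrite (mTm _ _ _ (hom_comp _ _ _ _ _ Hh Hh')), (mTm _ _ _ Hh'), (mTm _ _ _ Hh).
    replace (pre A A'' (fun a => h' (h a)) (hom_comp A A' A'' h h' Hh Hh') Q)
      with (pre A A' h Hh (pre A' A'' h' Hh' Q)); [tauto|].
    apply X_ext. intro a. reflexivity.
Qed.

Lemma T_faithful_ok : T_faithful.
Proof.
  intros A A' h1 h2 HA HA' Hh1 Hh2 H a.
  assert (E := H (sig_hat A a)). rewrite (Tmap_sig _ _ _ Hh1), (Tmap_sig _ _ _ Hh2) in E.
  apply (eq_primes _ _ _ _ _ (bdlA A' HA')). intros Q HQ.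
  assert (E' := f_equal (fun W => proj1_sig W (mkX A' Q HQ)) E). cbv beta in E'.
  rewrite !(mT_sig A') in E'. cbv beta in E'. unfold pf, mkX in E'. simpl in E'.
  rewrite E'. tauto.
Qed.

Section KP.
Variables A A' : WHBraw.
Variable h : wcar A -> wcar A'.
Hypothesis HWA : isWHB A.
Hypothesis Hh : WHBhom A A' h.

Definition KPc := {p : wcar A * wcar A | h (fst p) = h (snd p)}.

Definition kp_op2 (op : wcar A -> wcar A -> wcar A) (op' : wcar A' -> wcar A' -> wcar A')
  (Hop : forall a b, h (op a b) = op' (h a) (h b)) (x y : KPc) : KPc.
Proof.
  refine (exist _ (op (fst (proj1_sig x)) (fst (proj1_sig y)),
                   op (snd (proj1_sig x)) (snd (proj1_sig y))) _).
  simpl. rewrite !Hop, (proj2_sig x), (proj2_sig y). reflexivity.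
Defined.

Definition kp_c (c : wcar A) : KPc := exist _ (c, c) eq_refl.

Lemma hm a b : h (wmeet A a b) = wmeet A' (h a) (h b). Proof. apply Hh. Qed.
Lemma hj a b : h (wjoin A a b) = wjoin A' (h a) (h b). Proof. apply Hh. Qed.
Lemma hi a b : h (wimp A a b) = wimp A' (h a) (h b). Proof. apply Hh. Qed.
Lemma hc a b : h (wcoimp A a b) = wcoimp A' (h a) (h b). Proof. apply Hh. Qed.

Definition KP : WHBraw := {|
  wcar := KPc;
  wmeet := kp_op2 _ _ hm;
  wjoin := kp_op2 _ _ hj;
  wimp := kp_op2 _ _ hi;
  wcoimp := kp_op2 _ _ hc;
  wbot := kp_c (wbot A);
  wtop := kp_c (wtop A) |}.

Lemma kp_eq (x y : KPc) : fst (proj1_sig x) = fst (proj1_sig y) ->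
  snd (proj1_sig x) = snd (proj1_sig y) -> x = y.
Proof.
  destruct x as [[x1 x2] Hx], y as [[y1 y2] Hy]; simpl; intros; subst.
  f_equal. apply proof_irrelevance.
Qed.

Lemma KP_isWHB : isWHB KP.
Proof.
  destruct HWA as ((L1 & L2 & L3 & L4 & L5 & L6 & L7 & L8 & L9) &
    A1 & A2 & A3 & A4 & A5 & A6 & A7 & A8 & A9 & A10).
  unfold isWHB, wle. cbn.
  repeat split; intros; apply kp_eq; cbn; auto.
  all: first [apply A4 | apply A8 | apply A9 | apply A10].
Qed.

Lemma KP_fst : WHBhom KP A (fun x => fst (proj1_sig x)).
Proof. repeat split. Qed.
Lemma KP_snd : WHBhom KP A (fun x => snd (proj1_sig x)).
Proof. repeat split. Qed.

End KP.

Lemma mono_inj A A' h : isWHB A -> WHBhom A A' h -> WHBmono A A' h ->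
  forall a b, h a = h b -> a = b.
Proof.
  intros HA Hh Hm a b Hab.
  assert (E := Hm (KP A A' h Hh) _ _ (KP_isWHB A A' h HA Hh) (KP_fst A A' h Hh)
     (KP_snd A A' h Hh) (fun x => proj2_sig x) (exist _ (a, b) Hab)).
  exact E.
Qed.

Lemma pre_surj A A' h (HA : isWHB A) (HA' : isWHB A') (Hh : WHBhom A A' h) :
  (forall a b, h a = h b -> a = b) -> forall P : X A, exists Q, pre A A' h Hh Q = P.
Proof.
  intros Hinj P.
  assert (LA := bdlA A HA). assert (LA' := bdlA A' HA').
  destruct Hh as (H1 & H2 & H3 & H4 & H5 & H6) eqn:EH.
  destruct (PFT _ _ _ _ _ LA'
     (fun y => exists x, pf A P x /\ le _ (wmeet A') (h x) y)
     (fun y => exists x, ~ pf A P x /\ le _ (wmeet A') y (h x))) as (Q & HQ & HFQ & HQI).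
  - split; [|split].
    + exists (wtop A). split; [apply ptop|]. apply (le_top _ _ _ _ _ LA').
    + intros a b (x & Hx & Hl) Hab. exists x. split; auto. eapply (le_trans _ _ _ _ _ LA'); eauto.
    + intros a b (x & Hx & Hl) (x' & Hx' & Hl'). exists (wmeet A x x').
      split; [apply pmeet; auto|]. rewrite H1. apply (meet_mono _ _ _ _ _ LA'); auto.
  - split; [|split].
    + exists (wbot A). split; [apply pbot|]. apply (le_bot _ _ _ _ _ LA').
    + intros a b (x & Hx & Hl) Hab. exists x. split; auto. eapply (le_trans _ _ _ _ _ LA'); eauto.
    + intros a b (x & Hx & Hl) (x' & Hx' & Hl'). exists (wjoin A x x').
      split; [rewrite (pjoin A HA); tauto|]. rewrite H2. apply (join_mono _ _ _ _ _ LA'); auto.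
  - intros y (x & Hx & Hl) (x' & Hx' & Hl'). apply Hx'.
    assert (Hle : le _ (wmeet A') (h x) (h x')) by (eapply (le_trans _ _ _ _ _ LA'); eauto).
    unfold le in Hle. rewrite <- H1 in Hle. apply Hinj in Hle.
    assert (Hm : pf A P (wmeet A x x')) by (rewrite Hle; auto).
    apply (pmeet A HA) in Hm. tauto.
  - exists (mkX A' Q HQ). apply X_ext. intro a. unfold pre, pf, mkX. simpl. split.
    + intro Ha. apply NNPP. intro Hn. apply (HQI (h a) Ha). exists a. split; auto.
      apply (le_refl _ _ _ _ _ LA').
    + intro Ha. apply HFQ. exists a. split; auto. apply (le_refl _ _ _ _ _ LA').
Qed.

Lemma T_monos_ok : T_preserves_monos.
Proof.
  intros A A' h HA HA' Hh Hm C g1 g2 HC Hg1 Hg2 Heq c.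
  assert (Hs := pre_surj A A' h HA HA' Hh (mono_inj A A' h HA Hh Hm)).
  assert (E := Heq c). apply BA_ext. intro P. destruct (Hs P) as (Q & HQ).
  assert (E' := f_equal (fun W => proj1_sig W Q) E). cbv beta in E'.
  rewrite !(mTm _ _ _ Hh) in E'. rewrite HQ in E'. rewrite E'. tauto.
Qed.

Definition Phi (A : WHBraw) (B : TBAraw) (g : tcar (T A) -> tcar B) : wcar A -> wcar (M B) :=
  fun a => g (sig_hat A a).

Section AD.
Variable A : WHBraw.
Variable B : TBAraw.
Hypothesis HWA : isWHB A.
Hypothesis HB : isTBA B.
Variable f : wcar A -> tcar B.
Hypothesis Hf : WHBhom A (M B) f.

Lemma fm a b : f (wmeet A a b) = tmeet B (f a) (f b). Proof. apply Hf. Qed.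
Lemma fj a b : f (wjoin A a b) = tjoin B (f a) (f b). Proof. apply Hf. Qed.
Lemma fi a b : f (wimp A a b) = tG B (tjoin B (tneg B (f a)) (f b)). Proof. apply Hf. Qed.
Lemma fc a b : f (wcoimp A a b) = tP B (tmeet B (f a) (tneg B (f b))). Proof. apply Hf. Qed.
Lemma fb : f (wbot A) = tbot B. Proof. apply Hf. Qed.
Lemma ft : f (wtop A) = ttop B. Proof. apply Hf. Qed.

Lemma preB_prime Q (HQ : bprime B Q) : prime_filter A (fun a => Q (f a)).
Proof.
  split; [rewrite ft, (qtop B Q HQ); auto|].
  split; [rewrite fb, (qbot B Q HQ); auto|].
  split; [|split].
  - intros a b Ha Hab. unfold wle in Hab. rewrite <- Hab, fm, (qmeet B HB Q HQ) in *. tauto.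
  - intros a b Ha Hb. rewrite fm, (qmeet B HB Q HQ). auto.
  - intros a b H. rewrite fj, (qjoin B HB Q HQ) in H. auto.
Qed.

Definition preB Q (HQ : bprime B Q) : X A := exist _ (fun a => Q (f a)) (preB_prime Q HQ).

Definition valf (l : list (wcar A * wcar A)) : tcar B :=
  fold_right (fun q acc => tjoin B (tmeet B (f (fst q)) (tneg B (f (snd q)))) acc) (tbot B) l.

Lemma valf_sem Q (HQ : bprime B Q) l : Q (valf l) <-> dnfp l (fun a => Q (f a)).
Proof.
  induction l as [|(a, b) l IH]; cbn [valf fold_right fst snd].
  - rewrite (qbot B Q HQ). split; [intros []|intros (a & b & [] & _)].
  - rewrite (qjoin B HB Q HQ), (qmeet B HB Q HQ), (qneg B HB Q HQ), IH. split.
    + intros [[H1 H2]|(a' & b' & Hi & H1 & H2)]; [exists a, b; split; [left|]; auto|].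
      exists a', b'. split; [right|]; auto.
    + intros (a' & b' & [He|Hi] & H1 & H2); [injection He; intros; subst; auto|].
      right. exists a', b'. auto.
Qed.

Definition reprl (U : BA A) : list (wcar A * wcar A) :=
  proj1_sig (constructive_indefinite_description _ (proj1 (inBi A (proj1_sig U)) (proj2_sig U))).

Lemma reprl_spec U : forall P, proj1_sig U P <-> dnfp (reprl U) (pf A P).
Proof.
  unfold reprl. destruct constructive_indefinite_description as (l & Hl). simpl. auto.
Qed.

Definition gf (U : BA A) : tcar B := valf (reprl U).

Lemma gf_sem U Q (HQ : bprime B Q) : Q (gf U) <-> proj1_sig U (preB Q HQ).
Proof. unfold gf. rewrite (valf_sem Q HQ), reprl_spec. reflexivity. Qed.

Ltac gsolve := apply (beq B HB); let Q := fresh "Q" in let HQ := fresh "HQ" in intros Q HQ;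
  repeat (rewrite (qmeet B HB Q HQ) || rewrite (qjoin B HB Q HQ) || rewrite (qneg B HB Q HQ)
   || rewrite (qtop B Q HQ) || rewrite (qbot B Q HQ) || rewrite (gf_sem _ Q HQ));
  repeat (rewrite (mT_meet A HWA) || rewrite (mT_join A) || rewrite (mT_neg A HWA)
   || rewrite (mT_bot A) || rewrite (mT_top A) || rewrite (mT_sig A)); cbv beta;
  unfold pf, preB; simpl; tauto.

Lemma gf_meet U V : gf (tmeet (T A) U V) = tmeet B (gf U) (gf V). Proof. gsolve. Qed.
Lemma gf_join U V : gf (tjoin (T A) U V) = tjoin B (gf U) (gf V). Proof. gsolve. Qed.
Lemma gf_neg U : gf (tneg (T A) U) = tneg B (gf U). Proof. gsolve. Qed.
Lemma gf_bot : gf (tbot (T A)) = tbot B. Proof. gsolve. Qed.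
Lemma gf_top : gf (ttop (T A)) = ttop B. Proof. gsolve. Qed.
Lemma gf_sig a : gf (sig_hat A a) = f a. Proof. gsolve. Qed.

Lemma gf_G U : gf (tG (T A) U) = tG B (gf U).
Proof.
  destruct (BA_cnf A HWA U) as (l & ->). induction l as [|(a, b) l IH].
  - rewrite (G_cnfB_nil A HWA). change (cnfB A []) with (ttop (T A)).
    rewrite gf_top, (G_top B HB). reflexivity.
  - rewrite (G_cnfB_cons A HWA), gf_meet, gf_sig, IH.
    change (cnfB A ((a, b) :: l)) with
      (tmeet (T A) (tjoin (T A) (tneg (T A) (sig_hat A a)) (sig_hat A b)) (cnfB A l)).
    rewrite gf_meet, gf_join, gf_neg, !gf_sig, (G_meet B HB), fi. reflexivity.
Qed.

Lemma gf_H U : gf (tH (T A) U) = tH B (gf U).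
Proof.
  destruct (BA_cnf A HWA U) as (l & ->). induction l as [|(a, b) l IH].
  - rewrite (H_cnfB_nil A HWA). change (cnfB A []) with (ttop (T A)).
    rewrite gf_top, (H_top B HB). reflexivity.
  - rewrite (H_cnfB_cons A HWA), gf_meet, gf_neg, gf_sig, IH.
    change (cnfB A ((a, b) :: l)) with
      (tmeet (T A) (tjoin (T A) (tneg (T A) (sig_hat A a)) (sig_hat A b)) (cnfB A l)).
    rewrite gf_meet, gf_join, gf_neg, !gf_sig, (H_meet B HB), fc. f_equal.
    rewrite (H_eq B HB). f_equal. f_equal. apply (beq B HB). intros Q HQ.
    repeat (rewrite (qmeet B HB Q HQ) || rewrite (qneg B HB Q HQ) || rewrite (qjoin B HB Q HQ)).
    tauto.
Qed.

Lemma gf_hom : TBAhom (T A) B gf.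
Proof.
  split; [exact gf_meet|split; [exact gf_join|split; [exact gf_neg|]]].
  split; [exact gf_bot|split; [exact gf_top|split; [exact gf_G|exact gf_H]]].
Qed.

End AD.

Lemma adj_ok : T_left_adjoint_M.
Proof.
  exists Phi. split.
  - intros A B HA HB. split; [|split].
    + intros g (g1 & g2 & g3 & g4 & g5 & g6 & g7). unfold WHBhom, Phi; cbn.
      split; [intros; rewrite (sh_meet A HA), g1; reflexivity|].
      split; [intros; rewrite (sh_join A HA), g2; reflexivity|].
      split; [intros; rewrite (sh_imp A HA), g6, g2, g3; reflexivity|].
      split; [intros; rewrite (sh_coimp A HA); unfold tP; rewrite g3, g7, g3, g1, g3; reflexivity|].
      split; [rewrite (sh_bot A), g4; reflexivity|rewrite (sh_top A), g5; reflexivity].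
    + intros g1 g2 (a1 & a2 & a3 & a4 & a5 & a6 & a7) (b1 & b2 & b3 & b4 & b5 & b6 & b7) H U.
      unfold Phi in H.
      destruct (BA_dnf A HA U) as (l & ->). unfold dnfB.
      induction l as [|(a, b) l IH]; cbn [fold_right fst snd].
      * rewrite a4, b4. reflexivity.
      * rewrite a2, b2, a1, b1, a3, b3, IH, (H a), (H b). reflexivity.
    + intros f Hf. exists (gf A B f). split; [apply gf_hom; auto|].
      intro a. unfold Phi. apply gf_sig; auto.
  - intros A A' B B' h k g HA HA' HB HB' Hh Hk Hg a'. unfold Phi, Mmap.
    rewrite (Tmap_sig _ _ _ Hh). reflexivity.
Qed.

Theorem theorem6p3 :
  T_is_functor /\ M_is_functor /\
  T_left_adjoint_M /\
  T_preserves_monos /\ T_faithful /\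
  M_full /\ M_faithful.
Proof.
  split; [exact T_functor_ok|].
  split; [exact M_functor_ok|].
  split; [exact adj_ok|].
  split; [exact T_monos_ok|].
  split; [exact T_faithful_ok|].
  split; [exact M_full_ok|exact M_faithful_ok].
Qed.
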